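(* Let $(d_i)_{i\ge1}$ be an infinite alternate Lyndon word, $M$ its alternate Lyndon system, $L_M$ its language and $H_n$ the number of words of length $n$ in $L_M$. Let $A(n)=a_1\cdots a_n$ and $B(n)=b_1\cdots b_n$ be two words of length $n$ in $L_M$ with $A(n)\prec B(n)$, and let $\Gamma_{A,B}(n)$ be the cardinality of the set of words $X=x_1\cdots x_n\in L_M$ of length $n$ with $A(n)\preceq X\preceq B(n)$. Then $$\Gamma_{A,B}(n)=\sum_{i=1}^{n}(-1)^i(b_i-a_i)H_{n-i}+1.$$
   Context: Alternate order: for two words $x=x_1x_2\cdots$, $y=y_1y_2\cdots$ (both infinite, or both finite of the same length) over a finite alphabet $\{0,\dots,d\}$, $x\prec y$ iff there is $k$ with $x_i=y_i$ for all $i<k$ and $(-1)^k(x_k-y_k)<0$; $x\preceq y$ iff $x=y$ or $x\prec y$. An alternate Lyndon word is an infinite word $(d_i)_{i\ge1}$ with $d_1d_2\cdots\preceq d_nd_{n+1}\cdots$ for all $n\ge1$. Its alternate Lyndon system $M$ is the set of infinite words $x_1x_2\cdots$ over $\{0,\dots,d_1\}$ with $d_1d_2\cdots\preceq x_kx_{k+1}\cdots$ for all $k\ge1$; $L_M$ is the set of finite factors of elements of $M$; $H_0=1$. *)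

(* Defs.v *)
From HB Require Import structures.
From mathcomp Require Import all_boot all_order all_algebra.
From Stdlib Require Import ClassicalEpsilon.
Set Implicit Arguments. Unset Strict Implicit. Unset Printing Implicit Defensive.

(* Words are 0-indexed: index i corresponds to position i+1 of the paper.
   Hence (-1)^(position) = -1 iff the index is even.
   x < y (alternate) at first difference index k:
     index k even (position odd):  x_k > y_k
     index k odd  (position even): x_k < y_k *)

Definition alt_lt_inf (x y : nat -> nat) : Prop :=
  exists k, (forall i, i < k -> x i = y i) /\
            (if odd k then x k < y k else y k < x k).

Definition alt_le_inf (x y : nat -> nat) : Prop :=
  (forall i, x i = y i) \/ alt_lt_inf x y.

Definition shift (x : nat -> nat) (n : nat) : nat -> nat := fun i => x (n + i).

Definition alt_lt_fin (x y : seq nat) : Prop :=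
  size x = size y /\
  exists k, k < size x /\ (forall i, i < k -> nth 0 x i = nth 0 y i) /\
            (if odd k then nth 0 x k < nth 0 y k else nth 0 y k < nth 0 x k).

Definition alt_le_fin (x y : seq nat) : Prop := x = y \/ alt_lt_fin x y.

Definition alt_lyndon (d : nat -> nat) : Prop :=
  forall n, alt_le_inf d (shift d n).

Definition inM (d : nat -> nat) (x : nat -> nat) : Prop :=
  (forall i, x i <= d 0) /\ (forall k, alt_le_inf d (shift x k)).

Definition inL (d : nat -> nat) (w : seq nat) : Prop :=
  exists x, inM d x /\ exists j, w = mkseq (fun i => x (j + i)) (size w).

Definition pdec (P : Prop) : bool :=
  if excluded_middle_informative P then true else false.

(* H_n : number of words of length n in L_M (all letters of such words are <= d_1) *)
Definition Hcount (d : nat -> nat) (n : nat) : nat :=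
  #|[set w : n.-tuple 'I_((d 0).+1) | pdec (inL d (map val w))]|.

Definition Gamma (d : nat -> nat) (A B : seq nat) (n : nat) : nat :=
  #|[set w : n.-tuple 'I_((d 0).+1) |
      pdec (inL d (map val w) /\ alt_le_fin A (map val w) /\ alt_le_fin (map val w) B)]|.

(* Main.v *)
Require Import Defs.
From HB Require Import structures.
From mathcomp Require Import all_boot all_order all_algebra.
From Stdlib Require Import ClassicalEpsilon.
From mathcomp Require Import zify ring lra.

Definition cnt (D n : nat) (P : seq nat -> Prop) : nat :=
  \sum_(w : n.-tuple 'I_D.+1) pdec (P (map val w)).

Lemma pdecP (P : Prop) : reflect P (pdec P).
Proof. rewrite /pdec; case: excluded_middle_informative => h; constructor; done. Qed.

Lemma card_cnt D n P :
  #|[set w : n.-tuple 'I_D.+1 | pdec (P (map val w))]| = cnt D n P.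
Proof.
rewrite -sum1_card big_mkcond /cnt; apply: eq_bigr => w _; rewrite inE.
by case: pdec.
Qed.

Lemma cnt_cons D n P :
  cnt D n.+1 P = \sum_(c : 'I_D.+1) cnt D n (fun w => P (val c :: w)).
Proof.
rewrite /cnt pair_big /=.
rewrite (reindex (fun p : 'I_D.+1 * n.-tuple 'I_D.+1 => [tuple of p.1 :: p.2])) /=.
  by apply: eq_bigr => -[c w] _.
exists (fun w => (thead w, [tuple of behead w])).
  by move=> -[c w] _ /=; rewrite theadE; congr pair; apply: val_inj.
by move=> w _ /=; rewrite [in RHS](tuple_eta w).
Qed.

Lemma cnt_ext D n P Q : (forall w, size w = n -> (P w <-> Q w)) -> cnt D n P = cnt D n Q.
Proof.
move=> h; apply: eq_bigr => w _.
have := h (map val w); rewrite size_map size_tuple => /(_ erefl) e.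
by do 2 case: pdecP => //; tauto.
Qed.

Lemma cnt_lin D n P1 P2 P3 P4 :
  (forall w, size w = n -> pdec (P1 w) + pdec (P2 w) = pdec (P3 w) + pdec (P4 w))%N ->
  (cnt D n P1 + cnt D n P2 = cnt D n P3 + cnt D n P4)%N.
Proof.
move=> h; rewrite /cnt -!big_split /=; apply: eq_bigr => w _.
by apply: h; rewrite size_map size_tuple.
Qed.

Lemma cnt_false D n : cnt D n (fun _ => False) = 0%N.
Proof. apply: big1 => w _; by case: pdecP. Qed.

Lemma cnt_eq1 D n X : size X = n -> all (fun a => a <= D) X ->
  cnt D n (fun w => w = X) = 1%N.
Proof.
move=> hs ha.
have hs' : size (map (@inord D) X) == n by rewrite size_map hs.
pose t := Tuple hs'.
have ht : map val t = X.
  rewrite /= -map_comp -[RHS]map_id; apply/eq_in_map => a aX /=.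
  by rewrite inordK //; move/allP: ha => /(_ a aX).
rewrite /cnt (bigD1 t) //= big1.
  by rewrite ht; case: pdecP.
move=> w wt; case: pdecP => // e; exfalso; move/eqP: wt; apply.
by apply: val_inj; apply: (inj_map val_inj); rewrite e ht.
Qed.

Fixpoint altc (x y : seq nat) : bool * bool :=
  match x, y with
  | [::], [::] => (true, true)
  | a :: u, b :: v => let pq := altc u v in
       ((b < a) || ((a == b) && pq.2), (a < b) || ((a == b) && pq.1))
  | _, _ => (false, false)
  end.

Lemma altc_sym2 x y : (altc x y).2 = (altc y x).1 /\ (altc x y).1 = (altc y x).2.
Proof.
elim: x y => [|a u IH] [|b v] //=; case: (IH v) => h1 h2.
by rewrite h1 h2 eq_sym.
Qed.
Lemma altc_sym x y : (altc x y).2 = (altc y x).1.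
Proof. by case: (altc_sym2 x y). Qed.

Definition altle x y := (size x == size y) && (altc x y).1.

Lemma altle_nil : altle [::] [::]. Proof. by []. Qed.

Lemma altle_cons a u b v :
  altle (a :: u) (b :: v) = (size u == size v) && ((b < a) || ((a == b) && altle v u)).
Proof.
rewrite /altle /= altc_sym eqSS; case: (size u =P size v) => //= ->.
by rewrite eqxx.
Qed.

Lemma altle_size x y : altle x y -> size x = size y.
Proof. by case/andP => /eqP. Qed.

Lemma altle_refl x : altle x x.
Proof. elim: x => [|a u IH] //; by rewrite altle_cons !eqxx IH orbT. Qed.

Lemma altle_total x y : size x = size y -> altle x y || altle y x.
Proof.
elim: x y => [|a u IH] [|b v] // [] e; have := IH _ e; rewrite !altle_cons e eqxx /=.
case: (ltngtP a b) => [h|h|h] H /=.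
- done.
- done.
- by rewrite orbC.
Qed.

Lemma altle_anti x y : altle x y -> altle y x -> x = y.
Proof.
elim: x y => [|a u IH] [|b v] //; rewrite !altle_cons.
case: (ltngtP a b) => [h|h|h] /=.
- by rewrite andbF.
- by rewrite andbF.
- by move=> /andP[_ h1] /andP[_ h2]; rewrite h (IH _ h2 h1).
Qed.

Lemma altle_trans_n n x y z : size x = n -> altle x y -> altle y z -> altle x z.
Proof.
elim: n x y z => [|n IH] [|a u] [|b v] [|c w] // [] hs; rewrite !altle_cons.
move=> /andP [/eqP e1 h1] /andP [/eqP e2 h2]; rewrite e1 e2 eqxx /=.
move: h1 h2; case: (ltngtP b a) => [h|h|h] /=.
- move=> _ /orP [hc|/andP [/eqP hc _]]; apply/orP; left; lia.
- done.
- move=> h1 /orP [hc|/andP [/eqP hc h2]].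
  + by rewrite -h hc.
  + subst; rewrite eqxx (IH _ _ _ _ h2 h1) ?orbT //.
    by rewrite -e2 -e1.
Qed.

Lemma altle_trans x y z : altle x y -> altle y z -> altle x z.
Proof. exact: altle_trans_n. Qed.

Lemma altlt_cons a u b v :
  alt_lt_fin (a :: u) (b :: v) <->
  (size u = size v /\ (b < a \/ (a = b /\ alt_lt_fin v u))).
Proof.
split.
- move=> [/= [hs] [[|k] [hk [heq hc]]]]; split => //; first by left.
  right; split; first exact: (heq 0).
  split=> //; exists k; split; first by rewrite -hs.
  split; first by move=> i hi; symmetry; apply: (heq i.+1).
  by move: hc => /=; case: (odd k).
- move=> [hs [h|[<- [hs' [k [hk [heq hc]]]]]]].
  + by split; [rewrite /= hs|exists 0].
  + split; first by rewrite /= hs.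
    exists k.+1; split; first by rewrite /= -hs'.
    split; first by case=> [|i] //= hi; symmetry; apply: heq.
    by move: hc => /=; case: (odd k).
Qed.

Lemma altlt_nil y : ~ alt_lt_fin [::] y.
Proof. by move=> [_ [k [hk _]]]. Qed.

Lemma altltP_n n x y : size x = n -> (alt_lt_fin x y <-> (altle x y /\ x <> y)).
Proof.
elim: n x y => [|n IH] [|a u] y //= hs.
- split => [h|[h1 h2]]; first by case: (@altlt_nil y h).
  by case: y h1 h2.
- case: hs => hs; case: y => [|b v].
    split; [by move=> [] | by case].
  rewrite altlt_cons altle_cons.
  have IH' := IH v u.
  split.
  + move=> [e [h|[-> h]]].
    * rewrite e eqxx h; split=> //; case=> ha; subst; by rewrite ltnn in h.
    * have hv : size v = n by rewrite -e.
      case: (IH' hv) => h1 _; case: (h1 h) => h2 h3.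
      rewrite e !eqxx ltnn h2 /=; split=> //; case=> h4; apply: h3; by rewrite h4.
  + move=> [/andP [/eqP e /orP [h|/andP [/eqP eab h]]] hne]; split=> //; first by left.
    right; split=> //; subst b.
    have hv : size v = n by rewrite -e.
    apply/(IH' hv); split=> // vu; apply: hne; by rewrite vu.
Qed.

Lemma altleP x y : alt_le_fin x y <-> altle x y.
Proof.
split.
- case=> [->|h]; first exact: altle_refl.
  by case: ((altltP_n _ x y erefl).1 h).
- move=> h; case: (eqVneq x y) => [->|hne]; first by left.
  by right; apply/(altltP_n _ x y erefl); split=> //; apply/eqP.
Qed.


Lemma inLE d w : inL d w <->
  exists x, inM d x /\ exists j, forall i, i < size w -> nth 0 w i = x (j + i).
Proof.
split.
- move=> [x [hx [j hj]]]; exists x; split=> //; exists j => i hi.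
  by rewrite hj nth_mkseq // -hj.
- move=> [x [hx [j hj]]]; exists x; split=> //; exists j.
  apply: (@eq_from_nth _ 0); first by rewrite size_mkseq.
  by move=> i hi; rewrite nth_mkseq // hj.
Qed.

Lemma alt_le_inf_ext d y y' : (forall i, y i = y' i) -> alt_le_inf d y -> alt_le_inf d y'.
Proof.
move=> e [h|[k [h1 h2]]]; first by left => i; rewrite h e.
right; exists k; split; first by move=> i hi; rewrite -e h1.
by rewrite -e.
Qed.

Lemma inM_d d : alt_lyndon d -> inM d d.
Proof.
move=> hL; split; last exact: hL.
move=> n; case: (hL n) => [h|[[|k] [h1 h2]]].
- by have := h 0; rewrite /shift addn0 => ->.
- by move: h2 => /=; rewrite /shift addn0 => /ltnW.
- by have := h1 0 erefl; rewrite /shift addn0 => ->.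
Qed.

Definition consw (c : nat) (x : nat -> nat) (j : nat) : nat -> nat :=
  fun k => if k is k'.+1 then x (j + k') else c.

Lemma inM_consw d c x j : inM d x -> c <= d 0 -> alt_le_inf d (consw c x j) ->
  inM d (consw c x j).
Proof.
move=> [hx1 hx2] hc h; split; first by case=> [|k] //=; apply: hx1.
case=> [|k].
- by apply: alt_le_inf_ext h => i; rewrite /shift.
- apply: alt_le_inf_ext (hx2 (j + k)) => i; rewrite /shift /=.
  by rewrite addnA.
Qed.

Lemma inL_letters d w : inL d w -> all (fun a => a <= d 0) w.
Proof.
move/inLE=> [x [[hx _] [j hj]]]; apply/allP => a aw.
by rewrite -(nth_index 0 aw) hj ?index_mem.
Qed.

Lemma inL_tail d c Y : inL d (c :: Y) -> inL d Y.
Proof.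
move/inLE=> [x [hx [j hj]]]; apply/inLE; exists x; split=> //; exists j.+1 => i hi.
by move: (hj i.+1 hi) => /= ->; rewrite addSnnS.
Qed.

Lemma inL_cons_lt d c Y : c < d 0 -> inL d Y -> inL d (c :: Y).
Proof.
move=> hc /inLE [x [hx [j hj]]]; apply/inLE; exists (consw c x j); split.
  apply: inM_consw => //; first exact: ltnW.
  by right; exists 0.
by exists 0; case=> [|i] hi //=; rewrite hj.
Qed.

Definition Dn (d : nat -> nat) m := mkseq (fun i => d i.+1) m.

Lemma inL_cons_D d Y : alt_lyndon d -> inL d Y -> altle Y (Dn d (size Y)) ->
  inL d (d 0 :: Y).
Proof.
move=> hL /inLE [x [hx [j hj]]] /altleP [e|[_ [k [hk [heq hc]]]]].
- apply/inLE; exists d; split; first exact: inM_d.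
  exists 0; case=> [|i] hi //=; rewrite {1}e /Dn nth_mkseq //.
- apply/inLE; exists (consw (d 0) x j); split.
    apply: inM_consw => //.
    right; exists k.+1; split.
      case=> [|i] //= hi; rewrite -hj; last lia.
      by rewrite heq // /Dn nth_mkseq //; lia.
    by move: hc => /=; rewrite -hj // /Dn nth_mkseq //; case: (odd k).
  by exists 0; case=> [|i] hi //=; rewrite hj.
Qed.

Lemma inL_cons_D_le d Y : inL d (d 0 :: Y) -> altle Y (Dn d (size Y)).
Proof.
move/inLE=> [x [[_ hx] [j hj]]]; apply/altleP.
have eqY : (forall i, i < size Y -> nth 0 Y i = d i.+1) -> alt_le_fin Y (Dn d (size Y)).
  move=> h; left; apply: (@eq_from_nth _ 0); first by rewrite /Dn size_mkseq.
  by move=> i hi; rewrite h // /Dn nth_mkseq.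
case: (hx j) => [h|[[|k] [heq hc]]].
- apply: eqY => i hi; rewrite (h i.+1) /shift -(hj i.+1) //.
- exfalso; move: hc => /=; rewrite /shift -(hj 0) //=; by rewrite ltnn.
- case: (ltnP k (size Y)) => hk.
  + right; split; first by rewrite /Dn size_mkseq.
    exists k; split=> //; split.
      move=> i hi; rewrite /Dn nth_mkseq; last lia.
      by rewrite (heq i.+1) // /shift -(hj i.+1) //=; lia.
    by move: hc => /=; rewrite /shift -(hj k.+1) //= /Dn nth_mkseq //; case: (odd k).
  + apply: eqY => i hi; rewrite (heq i.+1) /shift -?(hj i.+1) //; lia.
Qed.

Lemma pdec_true (P : Prop) : P -> pdec P = true.
Proof. by case: pdecP. Qed.
Lemma pdec_false (P : Prop) : ~ P -> pdec P = false.
Proof. by case: pdecP. Qed.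
Lemma pdec_andb (P : Prop) (b : bool) : pdec (P /\ b) = pdec P && b.
Proof.
case: (pdecP (P /\ b)) => [[hp ->]|h]; first by rewrite pdec_true.
case: (pdecP P) => //= hp; case: b h => // h; by case: h.
Qed.
Lemma pdec_andb2 (P : Prop) (b c : bool) : pdec (P /\ b /\ c) = [&& pdec P, b & c].
Proof.
case: (pdecP (P /\ b /\ c)) => [[hp [-> ->]]|h]; first by rewrite pdec_true.
case: (pdecP P) => //= hp; case: b h => // h; case: c h => // h; by case: h.
Qed.
Lemma pdec_eq (w A : seq nat) : pdec (w = A) = (w == A).
Proof. by case: pdecP => [->|/eqP /negbTE ->]; rewrite ?eqxx. Qed.

Lemma interval_id (L : seq nat -> Prop) A B w : L A -> altle A B -> size w = size A ->
  (pdec (L w /\ altle w B) + pdec (w = A) =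
   pdec (L w /\ altle A w /\ altle w B) + pdec (L w /\ altle w A))%N.
Proof.
move=> hA hAB hs; rewrite !pdec_andb pdec_andb2 pdec_eq.
case: (w =P A) => [->|ne]; first by rewrite pdec_true // altle_refl hAB.
have nrq : ~~ (altle w A && altle A w).
  by apply/negP => /andP [h1 h2]; apply: ne; apply: altle_anti.
case: (pdec (L w)) => //=; rewrite addn0.
case/orP: (altle_total _ _ hs) => h.
- rewrite h (altle_trans _ _ _ h hAB); move: nrq; rewrite h /= => /negbTE ->; done.
- rewrite h /=; move: nrq; rewrite h andbT => /negbTE ->; by rewrite addn0.
Qed.

Lemma total_id (L : seq nat -> Prop) X w : L X -> size w = size X ->
  (pdec (L w /\ altle w X) + pdec (L w /\ altle X w) = pdec (L w) + pdec (w = X))%N.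
Proof.
move=> hX hs; rewrite !pdec_andb pdec_eq.
case: (w =P X) => [->|ne]; first by rewrite pdec_true // altle_refl.
have nrq : ~~ (altle w X && altle X w).
  by apply/negP => /andP [h1 h2]; apply: ne; apply: altle_anti.
case: (pdec (L w)) => //=.
case/orP: (altle_total _ _ hs) => h.
- by move: nrq; rewrite h /= => /negbTE ->.
- by move: nrq; rewrite h andbT => /negbTE ->.
Qed.

Definition Nc d m X := cnt (d 0) m (fun Y => inL d Y /\ altle Y X).
Definition Hc d m := cnt (d 0) m (inL d).

Lemma sum_t D x H R :
  (\sum_(c < D) (if x < c then H else if c == x :> nat then R else 0) =
   (D - x.+1) * H + (x < D) * R)%N.
Proof.
elim: D => [|D IH]; first by rewrite big_ord0.
rewrite big_ord_recr /= IH.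
case: (ltngtP x D) => h.
- have -> : x < D.+1 by lia.
  have -> : (D.+1 - x.+1 = (D - x.+1) + 1)%N by lia.
  lia.
- have -> : (x < D.+1) = false by apply/negbTE; lia.
  have -> : (D.+1 - x.+1 = 0)%N by lia.
  have -> : (D - x.+1 = 0)%N by lia.
  lia.
- have -> : x < D.+1 by lia.
  have -> : (D.+1 - x.+1 = 0)%N by lia.
  have -> : (D - x.+1 = 0)%N by lia.
  lia.
Qed.

Lemma cnt_single d m X : size X = m -> inL d X ->
  cnt (d 0) m (fun w => w = X) = 1%N.
Proof. move=> hs hX; apply: cnt_eq1 => //; exact: inL_letters. Qed.

Lemma NR d m X : size X = m -> inL d X ->
  (Nc d m X + cnt (d 0) m (fun w => inL d w /\ altle X w) = Hc d m + 1)%N.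
Proof.
move=> hs hX; rewrite -(@cnt_single d m X hs hX) /Nc /Hc; apply: cnt_lin => w hw.
by apply: total_id => //; rewrite hw hs.
Qed.

Lemma interval_cnt d m A B : size A = m -> inL d A -> altle A B ->
  (Nc d m B + 1 = cnt (d 0) m (fun w => inL d w /\ altle A w /\ altle w B) + Nc d m A)%N.
Proof.
move=> hs hA hAB; rewrite -(@cnt_single d m A hs hA) /Nc; apply: cnt_lin => w hw.
by apply: interval_id => //; rewrite hw hs.
Qed.

Lemma inL_cons_iff d c w : c < d 0 -> (inL d (c :: w) <-> inL d w).
Proof. move=> hc; split; [exact: inL_tail | exact: inL_cons_lt]. Qed.

Lemma inL_consD_iff d w : alt_lyndon d ->
  (inL d (d 0 :: w) <-> inL d w /\ altle w (Dn d (size w))).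
Proof.
move=> hL; split.
- move=> h; split; [exact: inL_tail h | exact: inL_cons_D_le].
- by move=> [h1 h2]; apply: inL_cons_D.
Qed.

Lemma Nstep_nat d m x X' : alt_lyndon d -> size X' = m -> inL d (x :: X') ->
  (Nc d m.+1 (x :: X') + Nc d m X' = (d 0 - x) * Hc d m + Nc d m (Dn d m) + 1)%N.
Proof.
move=> hL hs hX.
have hxD : x <= d 0 by move: (inL_letters _ _ hX) => /= /andP [].
have hX' : inL d X' := inL_tail _ _ _ hX.
set R := cnt (d 0) m (fun w => inL d w /\ altle X' w).
have E1 (c : nat) : c < d 0 ->
  cnt (d 0) m (fun w => inL d (c :: w) /\ altle (c :: w) (x :: X')) =
  if x < c then Hc d m else if c == x then R else 0%N.
  move=> hc; case: ifP => h1.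
    apply: cnt_ext => w hw; rewrite altle_cons hw hs eqxx h1 /= (inL_cons_iff d _ w hc).
    by split; [case|].
  case: ifP => h2.
    apply: cnt_ext => w hw; rewrite altle_cons hw hs eqxx h1 h2 /= (inL_cons_iff d _ w hc).
    done.
  transitivity (cnt (d 0) m (fun _ => False)); last exact: cnt_false.
  apply: cnt_ext => w hw.
  by rewrite altle_cons h1 h2 andbF; split=> [[]|].
rewrite /Nc cnt_cons big_ord_recr /=.
rewrite (eq_bigr (fun c : 'I_(d 0) => if x < c then Hc d m else if c == x :> nat then R else 0%N)); last by move=> c _; apply: E1.
rewrite sum_t.
have NR' := NR d m X' hs hX'; rewrite -/R -/(Nc d m X') in NR' *.
case: (ltngtP x (d 0)) hxD => // hxd _.
- have -> : cnt (d 0) m (fun w => inL d (d 0 :: w) /\ altle (d 0 :: w) (x :: X')) = Nc d m (Dn d m).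
    apply: cnt_ext => w hw; rewrite altle_cons hw hs eqxx hxd /= (inL_consD_iff d w hL) hw.
    by split=> [[]|[]].
  have -> : (d 0 - x = (d 0 - x.+1).+1)%N by lia.
  rewrite mulSn -/(Nc d m (Dn d m)); change (nat_of_bool true) with 1%N; rewrite mul1n; lia.
  have hXD : altle X' (Dn d m) by rewrite -hs; apply: inL_cons_D_le; rewrite -hxd. 
  have IC := interval_cnt d m X' (Dn d m) hs hX' hXD.
  have -> : cnt (d 0) m (fun w => inL d (d 0 :: w) /\ altle (d 0 :: w) (x :: X')) =
     cnt (d 0) m (fun w => inL d w /\ altle X' w /\ altle w (Dn d m)).
    apply: cnt_ext => w hw; rewrite altle_cons hw hs eqxx hxd ltnn eqxx /= (inL_consD_iff d w hL) hw.
    by split=> [[[h1 h2] h3]|[h1 [h2 h3]]].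
  rewrite hxd subnn -/(Nc d m (Dn d m)).
  have -> : (d 0 - (d 0).+1 = 0)%N by lia.
  change (nat_of_bool false) with 0%N; rewrite !mul0n; lia.
Qed.

Import GRing.Theory Num.Theory.
Local Open Scope ring_scope.

Definition F d m X : int :=
  \sum_(i < m) (-1) ^+ i.+1 * (nth 0%N X i)%:Z * (Hc d (m - i.+1))%:Z.

Lemma mainK d m : alt_lyndon d -> exists K : int,
  forall X, size X = m -> inL d X -> (Nc d m X)%:Z = F d m X + K.
Proof.
move=> hL; elim: m => [|m [K IH]].
  exists (Nc d 0 [::])%:Z => -[|a X] // _ _; by rewrite /F big_ord0 add0r.
exists ((d 0)%:Z * (Hc d m)%:Z + (Nc d m (Dn d m))%:Z + 1 - K) => -[|x X'] //= [hs] hX.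
have hxD : (x <= d 0)%N by move: (inL_letters _ _ hX) => /= /andP [].
have hN := congr1 Posz (Nstep_nat d m x X' hL hs hX).
rewrite !PoszD PoszM -subzn // in hN.
have hI := IH X' hs (inL_tail _ _ _ hX).
have hF : F d m.+1 (x :: X') = - (x%:Z * (Hc d m)%:Z) - F d m X'.
  rewrite /F big_ord_recl /= subn1 /= expr1 mulN1r -sumrN; congr (_ + _).
  - by rewrite mulNr.
  - apply: eq_bigr => i _; rewrite /bump /= add0n subSS exprS; ring.
rewrite hF; move: hN hI; rewrite mulrBl.
lra.
Qed.

Theorem lemma1 (d : nat -> nat) (n : nat) (A B : seq nat) :
  alt_lyndon d ->
  size A = n -> size B = n ->
  inL d A -> inL d B ->
  alt_lt_fin A B ->
  (Gamma d A B n)%:Z =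
    \sum_(i < n) (-1) ^+ i.+1 * ((nth 0%N B i)%:Z - (nth 0%N A i)%:Z)
                   * (Hcount d (n - i.+1))%:Z + 1.
Proof.
move=> hL hA hB LA LB hlt.
have hAB : altle A B := (altleP A B).1 (or_intror hlt).
have HE k : Hcount d k = Hc d k by rewrite /Hcount (card_cnt (d 0) k (inL d)).
rewrite /Gamma (card_cnt (d 0) n (fun w => inL d w /\ alt_le_fin A w /\ alt_le_fin w B)).
have -> : cnt (d 0) n (fun w => inL d w /\ alt_le_fin A w /\ alt_le_fin w B) =
          cnt (d 0) n (fun w => inL d w /\ altle A w /\ altle w B).
  apply: cnt_ext => w _; rewrite !altleP; done.
have IC := congr1 Posz (interval_cnt d n A B hA LA hAB).
rewrite !PoszD in IC.
have [K hK] := mainK d n hL.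
have hKA := hK A hA LA; have hKB := hK B hB LB.
have hsum : \sum_(i < n) (-1) ^+ i.+1 * ((nth 0%N B i)%:Z - (nth 0%N A i)%:Z)
                   * (Hcount d (n - i.+1))%:Z = F d n B - F d n A.
  rewrite /F -sumrB; apply: eq_bigr => i _; rewrite HE; ring.
rewrite hsum; move: IC hKA hKB; lra.
Qed.
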